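(* Let $n,m,\bar m$ be positive integers with $n\le m$ and $n\le \bar m$. Let $\mathcal F$ and $\bar{\mathcal F}$ be the fields of rational functions in $x_1,\dots,x_m$ and in $\bar x_1,\dots,\bar x_{\bar m}$, respectively. Let $\varphi:\mathbb{Q}_{\mathrm{sf}}(x_1,\dots,x_m)\to \mathrm{Trop}(\bar x_{n+1},\dots,\bar x_{\bar m})$ be a semifield homomorphism (determined by an arbitrary choice of Laurent monomials $\varphi(x_i)$), and let $\psi:\mathbb{Q}_{\mathrm{sf}}(x_1,\dots,x_m)\to\mathbb{Q}_{\mathrm{sf}}(\bar x_1,\dots,\bar x_{\bar m})$ be the semifield homomorphism with $\psi(x_i)=\bar x_i\,\varphi(x_i)$ for $i\le n$ and $\psi(x_i)=\varphi(x_i)$ for $i>n$. Let $(\mathbf{x}(t),\mathbf{y}(t),B(t))_{t\in\mathbb{T}_n}$ be a seed pattern in $\mathcal F$ with frozen variables $x_{n+1},\dots,x_m$, with $\mathbf{x}(t)=(x_{1;t},\dots,x_{n;t})$, $\mathbf{y}(t)=(y_{1;t},\dots,y_{n;t})\in\mathrm{Trop}(x_{n+1},\dots,x_m)^n$, $B(t)=(b^t_{ij})$, and initial cluster $\mathbf{x}(t_\circ)=(x_1,\dots,x_n)$. Define $$\bar x_{i;t}=\frac{\psi(x_{i;t})}{\varphi(x_{i;t})},\qquad \bar y_{k;t}=\varphi(\hat y_{k;t})=\varphi(y_{k;t})\prod_{i=1}^n\varphi(x_{i;t})^{b^t_{ik}},$$ and $\bar{\mathbf x}(t)=(\bar x_{1;t},\dots,\bar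 x_{n;t})$, $\bar{\mathbf y}(t)=(\bar y_{1;t},\dots,\bar y_{n;t})$. Then $(\bar{\mathbf x}(t),\bar{\mathbf y}(t),B(t))_{t\in\mathbb{T}_n}$ is a seed pattern in $\bar{\mathcal F}$, with the same exchange matrices $B(t)$ and with frozen variables $\bar x_{n+1},\dots,\bar x_{\bar m}$.
   Context: $\mathbb{Q}_{\mathrm{sf}}(u_1,\dots,u_l)$ denotes the semifield of subtraction-free rational expressions in $u_1,\dots,u_l$ (with ordinary multiplication and addition). $\mathrm{Trop}(u_1,\dots,u_l)$ is the tropical semifield: the multiplicative group of Laurent monomials in $u_1,\dots,u_l$ with addition $\prod u_j^{a_j}\oplus\prod u_j^{b_j}=\prod u_j^{\min(a_j,b_j)}$. A semifield homomorphism preserves multiplication and sends $+$ to the addition of the target. $\mathbb{T}_n$ is the $n$-regular tree whose edges are labeled by $1,\dots,n$ so that the $n$ edges at each vertex have distinct labels. A seed pattern in a field $\mathcal F$ (of rational functions in $m$ variables) with frozen variables $x_{n+1},\dots,x_m$ is an assignment to each $t\in\mathbb{T}_n$ of a triple $(\mathbf{x}(t),\mathbf{y}(t),B(t))$, where $\mathbf{x}(t)=(x_{1;t},\dots,x_{n;t})\in\mathcal F^n$ is such that $x_{1;t},\dots,x_{n;t},x_{n+1},\dots,x_m$ are algebraically independent and generate $\mathcal F$, $\mathbf{y}(t)\in\mathrm{Trop}(x_{n+1},\dots,x_m)^n$, and $B(t)=(b^t_{ij})$ is a skew-symmetrizable integer $n\times n$ matrix, such that for every edge $t\overset{k}{-}t'$: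 $B(t')=\mu_k(B(t))$ (matrix mutation: $b'_{ij}=-b_{ij}$ if $k\in\{i,j\}$, else $b'_{ij}=b_{ij}+\mathrm{sgn}(b_{ik})\max(b_{ik}b_{kj},0)$); $y_{k;t'}=y_{k;t}^{-1}$ and $y_{j;t'}=y_{j;t}\,y_{k;t}^{\max(b^t_{kj},0)}(y_{k;t}\oplus1)^{-b^t_{kj}}$ for $j\ne k$; $x_{i;t'}=x_{i;t}$ for $i\ne k$; and $$x_{k;t}\,x_{k;t'}=\frac{y_{k;t}\prod_{b^t_{ik}>0}x_{i;t}^{b^t_{ik}}+\prod_{b^t_{ik}<0}x_{i;t}^{-b^t_{ik}}}{y_{k;t}\oplus1}$$ (products over $i\in\{1,\dots,n\}$). By these relations every $x_{i;t}$ is a subtraction-free rational expression in $x_1,\dots,x_m$, so $\psi(x_{i;t})$ and $\varphi(x_{i;t})$ are defined. Here $\hat y_{k;t}=y_{k;t}\prod_{i=1}^n x_{i;t}^{b^t_{ik}}$. *)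

(* Defs.v *)
From HB Require Import structures.
From mathcomp Require Import all_boot all_order all_algebra.
From mathcomp Require Import mpoly fraction.
Set Implicit Arguments. Unset Strict Implicit. Unset Printing Implicit Defensive.
Import Order.TTheory GRing.Theory Num.Theory.
Local Open Scope ring_scope.

Notation tofrac R := (@FracField.tofrac R).

(* (variable x_{i+1} is indexed by i : 'I_m, i.e. 0-based).            *)
Definition ratfun (m : nat) := {fraction {mpoly rat[m]}}.

Definition X (m : nat) (i : 'I_m) : ratfun m := tofrac _ ('X_i : {mpoly rat[m]}).

(* variable with a natural-number (0-based) index; 1 if out of range *)
Definition Xn (m : nat) (i : nat) : ratfun m :=
  match @insub nat (fun k => k < m)%N _ i with Some j => X j | None => 1 end.

Definition ratC (m : nat) (c : rat) : ratfun m := tofrac _ (c%:MP : {mpoly rat[m]}).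

Definition peval (m : nat) (v : 'I_m -> ratfun m) (p : {mpoly rat[m]}) : ratfun m :=
  mmap (@ratC m) v p.

Definition alg_indep (m : nat) (v : 'I_m -> ratfun m) : Prop :=
  forall p : {mpoly rat[m]}, peval v p = 0 -> p = 0.

Definition generates (m : nat) (v : 'I_m -> ratfun m) : Prop :=
  forall f : ratfun m, exists p q : {mpoly rat[m]},
    peval v q != 0 /\ f = peval v p / peval v q.

(* Subtraction-free rational expressions Q_sf(x_1,...,x_m), as the     *)
(* sub-semifield of F m generated by the variables under +, *, ^-1.    *)
Inductive sf (m : nat) : ratfun m -> Prop :=
| sf_var (i : 'I_m) : sf (X i)
| sf_add f g : sf f -> sf g -> sf (f + g)
| sf_mul f g : sf f -> sf g -> sf (f * g)
| sf_inv f : sf f -> sf f^-1.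

(* Tropical semifield Trop(u_1,...,u_k): Laurent monomials represented *)
(* by their integer exponent vectors.                                  *)
Definition trop (k : nat) := {ffun 'I_k -> int}.
Definition tmul k (a b : trop k) : trop k := [ffun j => a j + b j].
Definition tadd k (a b : trop k) : trop k := [ffun j => Order.min (a j) (b j)].
Definition tone k : trop k := [ffun _ => 0].
Definition tpow k (a : trop k) (z : int) : trop k := [ffun j => a j * z].

(* Trop(x_{n+1},...,x_m) = trop (m - n); the monomial as an element of F m *)
Definition mono (m n : nat) (e : trop (m - n)) : ratfun m :=
  \prod_(j < m - n) Xn m (n + j) ^ (e j).

Definition sf_hom_trop (m k : nat) (phi : ratfun m -> trop k) : Prop :=
  forall f g, sf f -> sf g ->
    phi (f + g) = tadd (phi f) (phi g) /\ phi (f * g) = tmul (phi f) (phi g).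

Definition sf_hom (m mb : nat) (psi : ratfun m -> ratfun mb) : Prop :=
  (forall f, sf f -> sf (psi f)) /\
  forall f g, sf f -> sf g ->
    psi (f + g) = psi f + psi g /\ psi (f * g) = psi f * psi g.

(* The n-regular tree T_n: vertices are reduced words in the labels    *)
(* 'I_n (no two consecutive equal letters); t -k- t' iff one is the    *)
(* other with the letter k appended.                                   *)
Definition reduced n (s : seq 'I_n) : bool := sorted (fun a b => a != b) s.
Definition vert (n : nat) := {s : seq 'I_n | reduced s}.
Definition troot (n : nat) : vert n := exist _ [::] isT.
Definition edge n (t : vert n) (k : 'I_n) (t' : vert n) : Prop :=
  sval t' = rcons (sval t) k \/ sval t = rcons (sval t') k.

Definition skew_symmetrizable n (B : 'M[int]_n) : Prop :=
  exists d : 'I_n -> int, (forall i, 0 < d i) /\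
    forall i j, d i * B i j = - (d j * B j i).

Definition mat_mut n (k : 'I_n) (B : 'M[int]_n) : 'M[int]_n :=
  \matrix_(i, j) (if (i == k) || (j == k) then - B i j
                  else B i j + sgz (B i k) * Order.max (B i k * B k j) 0).

Definition y_mut n r (k : 'I_n) (B : 'M[int]_n) (y : 'I_n -> trop r) (j : 'I_n)
  : trop r :=
  if j == k then tpow (y k) (-1)
  else tmul (y j) (tmul (tpow (y k) (Order.max (B k j) 0))
                        (tpow (tadd (y k) (tone r)) (- B k j))).

Definition ext_cluster (m n : nat) (x : 'I_n -> ratfun m) : 'I_m -> ratfun m :=
  fun i => match @insub nat (fun k => k < n)%N _ (val i) with
           | Some j => x j | None => X i end.

Definition seed_pattern (n m : nat) (x : vert n -> 'I_n -> ratfun m)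
  (y : vert n -> 'I_n -> trop (m - n)) (B : vert n -> 'M[int]_n) : Prop :=
  (forall t, alg_indep (ext_cluster (x t)) /\ generates (ext_cluster (x t))) /\
  (forall t, skew_symmetrizable (B t)) /\
  (forall t t' k, edge t k t' ->
     [/\ B t' = mat_mut k (B t),
         y t' = y_mut k (B t) (y t),
         (forall i, i != k -> x t' i = x t i) &
         x t k * x t' k =
           (mono (y t k) * \prod_(i < n | 0 < B t i k) x t i ^ B t i k
            + \prod_(i < n | B t i k < 0) x t i ^ (- B t i k))
           / mono (tadd (y t k) (tone (m - n)))]).

Definition yhat n m (x : 'I_n -> ratfun m) (y : 'I_n -> trop (m - n))
  (B : 'M[int]_n) (k : 'I_n) : ratfun m :=
  mono (y k) * \prod_(i < n) x i ^ B i k.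

(* Main.v *)
Require Import Defs.
From HB Require Import structures.
From mathcomp Require Import all_boot all_order all_algebra.
From mathcomp Require Import mpoly fraction.
From mathcomp Require Import ring lra zify.
From Stdlib Require Import FunctionalExtensionality.
Set Implicit Arguments. Unset Strict Implicit. Unset Printing Implicit Defensive.
Import Order.TTheory GRing.Theory Num.Theory.
Local Open Scope ring_scope.
Lemma mmap_uniq N (S : comNzRingType) (g : {mpoly rat[N]} -> S)
  (f : {rmorphism rat -> S}) (h : 'I_N -> S) :
  (forall p q, g (p + q) = g p + g q) -> (forall p q, g (p * q) = g p * g q) ->
  (forall c, g c%:MP = f c) -> (forall i, g 'X_i = h i) ->
  forall p, g p = mmap f h p.
Proof.
move=> gD gM gC gX; have g0 : g 0 = 0.
  by have := gC 0; rewrite !rmorph0.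
have g1 : g 1 = 1 by have := gC 1; rewrite !rmorph1.
have gXn : forall x k, g (x ^+ k) = g x ^+ k.
  by move=> x; elim=> [|k IH]; rewrite ?expr0 // !exprS gM IH.
elim/mpolyind=> [|c m p _ _ IH]; first by rewrite g0 mmap0.
rewrite gD mmapD IH mmapZ mmapX -mul_mpolyC gM gC; congr (_ * _ + _).
rewrite mpolyXE_id /mmap1 (big_morph g gM g1); apply: eq_bigr => i _.
by rewrite gXn gX.
Qed.

Lemma frac_repr (R: idomainType) (x : {fraction R}) : exists p q : R, q != 0 /\ x = @FracField.tofrac R p / @FracField.tofrac R q.
Proof.
elim/quotW: x => r; exists (\n_r), (\d_r); split; first exact: denom_ratioP.
rewrite !piE; apply/eqmodP; rewrite /= FracField.equivfE /FracField.mulf /FracField.invf.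
have d0 := denom_ratioP r.
rewrite !numden_Ratio ?oner_eq0 ?mulf_neq0 // ?mul1r ?mulr1 //.
  by rewrite mulrC.
all: exact: oner_neq0.
Qed.
Section Generic.
Variable N : nat.
Local Notation F := (ratfun N).
Local Notation MP := {mpoly rat[N]}.
Implicit Types (v : 'I_N -> F) (p q A B D : MP).

Definition ratRM : {rmorphism rat -> F} := (@FracField.tofrac _ \o @mpolyC N rat)%FUN.

Lemma pevalE (v : 'I_N -> F) p : peval v p = mmap ratRM v p.
Proof. by []. Qed.

Lemma pevalD v p q : peval v (p + q) = peval v p + peval v q.
Proof. by rewrite !pevalE rmorphD. Qed.
Lemma pevalM v p q : peval v (p * q) = peval v p * peval v q.
Proof. by rewrite !pevalE rmorphM. Qed.
Lemma pevalC v c : peval v c%:MP = ratRM c.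
Proof. by rewrite pevalE mmapC. Qed.
Lemma peval1 v : peval v 1 = 1.
Proof. by rewrite pevalE rmorph1. Qed.
Lemma peval0 v : peval v 0 = 0.
Proof. by rewrite pevalE rmorph0. Qed.
Lemma pevalX v i : peval v 'X_i = v i.
Proof. by rewrite pevalE mmapX mmap1U. Qed.

Lemma peval_ext v v' p : v =1 v' -> peval v p = peval v' p.
Proof.
move=> e; rewrite /peval /mmap; apply: eq_bigr => m _; congr (_ * _).
exact: mmap1_eq.
Qed.

Lemma mpolyX_neq0 (i : 'I_N) : ('X_i : MP) != 0.
Proof.
apply/eqP => h; have := mcoeffXU rat i i; rewrite h mcoeff0 eqxx => /eqP.
by rewrite eq_sym oner_eq0.
Qed.

Lemma indep_neq0 v i : alg_indep v -> v i <> 0.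
Proof.
move=> hv h; have := hv 'X_i; rewrite pevalX h => /(_ erefl) /eqP.
by apply/negP; exact: mpolyX_neq0.
Qed.

Lemma peval_id p : peval (@X N) p = @FracField.tofrac _ p.
Proof.
rewrite pevalE; symmetry; apply: mmap_uniq.
- exact: rmorphD. - exact: rmorphM. - by []. - by [].
Qed.

Lemma X_indep : alg_indep (@X N).
Proof. by move=> p; rewrite peval_id => /eqP; rewrite tofrac_eq0 => /eqP. Qed.

Lemma X_gen : generates (@X N).
Proof.
move=> f; have [p [q [q0 ->]]] := frac_repr f.
by exists p, q; rewrite !peval_id tofrac_eq0.
Qed.

Variable k : 'I_N.

Definition zk : MP -> MP := mmap (@mpolyC N rat) (fun i => if i == k then 0 else 'X_i).
Definition noX (A : MP) := zk A = A.

Lemma zkD p q : zk (p + q) = zk p + zk q. Proof. exact: rmorphD. Qed.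
Lemma zkM p q : zk (p * q) = zk p * zk q. Proof. exact: rmorphM. Qed.
Lemma zkC c : zk c%:MP = c%:MP. Proof. exact: mmapC. Qed.
Lemma zkX i : zk 'X_i = if i == k then 0 else 'X_i.
Proof. by rewrite /zk mmapX mmap1U. Qed.

Lemma noXD A B : noX A -> noX B -> noX (A + B).
Proof. by rewrite /noX zkD => -> ->. Qed.
Lemma noXM A B : noX A -> noX B -> noX (A * B).
Proof. by rewrite /noX zkM => -> ->. Qed.
Lemma noXC c : noX c%:MP. Proof. exact: zkC. Qed.
Lemma noX1 : noX 1. Proof. by rewrite /noX /zk rmorph1. Qed.
Lemma noX0 : noX 0. Proof. by rewrite /noX /zk rmorph0. Qed.
Lemma noXX i : i != k -> noX 'X_i.
Proof. by rewrite /noX zkX => /negbTE ->. Qed.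

Lemma peval_zk v p : peval v (zk p) = peval (fun i => if i == k then 0 else v i) p.
Proof.
rewrite [RHS]pevalE; apply: (mmap_uniq (g := fun p => peval v (zk p))).
- by move=> a b; rewrite zkD pevalD.
- by move=> a b; rewrite zkM pevalM.
- by move=> c; rewrite zkC pevalC.
- by move=> i; rewrite zkX; case: eqP; rewrite ?peval0 ?pevalX.
Qed.

Lemma peval_noX v v' A : (forall i, i != k -> v' i = v i) -> noX A ->
  peval v' A = peval v A.
Proof.
move=> hv hA; rewrite -hA !peval_zk; apply: peval_ext => i.
by case: eqP => // /eqP /hv.
Qed.

Lemma mulF_neq0 (K : fieldType) (x y : K) : x <> 0 -> y <> 0 -> x * y <> 0.
Proof. by move=> h1 h2 /eqP; rewrite mulf_eq0 => /orP [] /eqP. Qed.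
Lemma invF_neq0 (K : fieldType) (x : K) : x <> 0 -> x^-1 <> 0.
Proof. by move=> h1 /eqP; rewrite invr_eq0 => /eqP. Qed.
Lemma addF_div (K : fieldType) (x1 y1 x2 y2 : K) : y1 <> 0 -> y2 <> 0 ->
  x1 / y1 + x2 / y2 = (x1 * y2 + x2 * y1) / (y1 * y2).
Proof. by move=> /eqP h1 /eqP h2; rewrite addf_div. Qed.

Definition inK (v : 'I_N -> F) (f : F) :=
  exists A D, [/\ noX A, noX D, peval v D <> 0 & f = peval v A / peval v D].

Lemma inK_peval v A : noX A -> inK v (peval v A).
Proof.
move=> hA; exists A, 1; rewrite peval1 divr1; split=> //; first exact: noX1.
by move=> /eqP; rewrite oner_eq0.
Qed.
Lemma inK1 v : inK v 1.
Proof. by have := inK_peval v noX1; rewrite peval1. Qed.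
Lemma inK0 v : inK v 0.
Proof. by have := inK_peval v noX0; rewrite peval0. Qed.
Lemma inKX v i : i != k -> inK v (v i).
Proof. by move=> /noXX /(inK_peval v); rewrite pevalX. Qed.
Lemma inKD v f g : inK v f -> inK v g -> inK v (f + g).
Proof.
move=> [A1 [D1 [hA1 hD1 n1 ->]]] [A2 [D2 [hA2 hD2 n2 ->]]].
exists (A1 * D2 + A2 * D1), (D1 * D2); split.
- by apply: noXD; apply: noXM.
- exact: noXM.
- by rewrite pevalM; apply: mulF_neq0.
by rewrite pevalD !pevalM addF_div.
Qed.
Lemma inKM v f g : inK v f -> inK v g -> inK v (f * g).
Proof.
move=> [A1 [D1 [hA1 hD1 n1 ->]]] [A2 [D2 [hA2 hD2 n2 ->]]].
exists (A1 * A2), (D1 * D2); split; try exact: noXM.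
- by rewrite pevalM; apply: mulF_neq0.
by rewrite !pevalM mulf_div.
Qed.
Lemma inKV v f : inK v f -> inK v f^-1.
Proof.
move=> [A [D [hA hD n ->]]].
case: (eqVneq (peval v A) 0) => [z|/eqP nz].
  by rewrite z mul0r invr0; exact: inK0.
by exists D, A; split=> //; rewrite invfM invrK mulrC.
Qed.
Lemma inKXn v f j : inK v f -> inK v (f ^+ j).
Proof.
move=> h; elim: j => [|j IH]; first by rewrite expr0; exact: inK1.
by rewrite exprS; apply: inKM.
Qed.
Lemma inKXz v f (z : int) : inK v f -> inK v (f ^ z).
Proof.
move=> h; case: z => j; first by apply: inKXn.
by rewrite NegzE -invr_expz; apply: inKV; apply: inKXn.
Qed.
Lemma inK_prod v (I : Type) (r : seq I) (P : pred I) (G : I -> F) :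
  (forall i, P i -> inK v (G i)) -> inK v (\prod_(i <- r | P i) G i).
Proof. by move=> h; apply: big_ind => //; [exact: inK1 | exact: inKM]. Qed.

End Generic.
Section Theta.
Variable N : nat.
Local Notation F := (ratfun N).
Local Notation MP := {mpoly rat[N]}.
Implicit Types (v : 'I_N -> F) (p q A B D : MP).
Variable k : 'I_N.

Definition pcRM : {rmorphism rat -> {poly MP}} := (polyC \o @mpolyC N rat)%FUN.
Definition Theta : MP -> {poly MP} :=
  mmap pcRM (fun i => if i == k then 'X else ('X_i)%:P).

Lemma ThetaD p q : Theta (p + q) = Theta p + Theta q. Proof. exact: rmorphD. Qed.
Lemma ThetaM p q : Theta (p * q) = Theta p * Theta q. Proof. exact: rmorphM. Qed.
Lemma ThetaC c : Theta c%:MP = (c%:MP)%:P. Proof. exact: mmapC. Qed.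
Lemma ThetaX i : Theta 'X_i = if i == k then 'X else ('X_i)%:P.
Proof. by rewrite /Theta mmapX mmap1U. Qed.

Lemma mpoly_id p : p = mmap (@mpolyC N rat) (fun i => 'X_i) p.
Proof. by apply: (mmap_uniq (g := id)). Qed.

Lemma Theta_hornerX p : (Theta p).['X_k] = p.
Proof.
rewrite [RHS]mpoly_id; apply: (mmap_uniq (g := fun p => (Theta p).['X_k])).
- by move=> a b; rewrite ThetaD hornerD.
- by move=> a b; rewrite ThetaM hornerM.
- by move=> c; rewrite ThetaC hornerC.
- by move=> i; rewrite ThetaX; case: eqP => [->|]; rewrite ?hornerX ?hornerC.
Qed.

Lemma Theta_eq0 p : Theta p = 0 -> p = 0.
Proof. by move=> h; rewrite -(Theta_hornerX p) h horner0. Qed.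

Lemma Theta_coef p j : noX k ((Theta p)`_j).
Proof.
have e : map_poly (zk k) (Theta p) = Theta p.
  rewrite [RHS]/Theta; apply: (mmap_uniq (g := fun p => map_poly (zk k) (Theta p))).
  - by move=> a b; rewrite ThetaD rmorphD.
  - by move=> a b; rewrite ThetaM rmorphM.
  - by move=> c; rewrite ThetaC map_polyC; exact: (congr1 polyC (zkC k c)).
  - move=> i; rewrite ThetaX; case: eqP => [_|/eqP ne]; first by rewrite map_polyX.
    have := zkX k i; rewrite (negbTE ne) => e; rewrite map_polyC; exact: (congr1 polyC e).
by rewrite /noX -{2}e coef_map.
Qed.

Lemma Theta_noX A : noX k A -> Theta A = A%:P.
Proof.
move=> hA; rewrite -hA.
pose h0 := fun i => if i == k then 0 else ('X_i : MP)%:P.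
have -> : Theta (zk k A) = mmap pcRM h0 A.
  apply: (mmap_uniq (g := fun p => Theta (zk k p))).
  - by move=> a b; rewrite zkD ThetaD.
  - by move=> a b; rewrite zkM ThetaM.
  - by move=> c; rewrite zkC ThetaC.
  - move=> i; rewrite zkX /h0; case: eqP => [_|/eqP ne]; first exact: rmorph0.
    by rewrite ThetaX (negbTE ne).
symmetry; apply: (mmap_uniq (g := fun p => (zk k p)%:P)).
- by move=> a b; rewrite zkD polyCD.
- by move=> a b; rewrite zkM polyCM.
- by move=> c; rewrite zkC.
- by move=> i; rewrite zkX /h0; case: eqP.
Qed.

End Theta.
Lemma polyC_hornerX (R : comNzRingType) (p : {poly R}) : (map_poly polyC p).['X] = p.
Proof.
rewrite horner_coef size_map_polyC; apply/esym; rewrite -[LHS]coefK poly_def.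
by apply: eq_bigr => i _; rewrite coef_map mul_polyC.
Qed.

Lemma solve_mul (K : fieldType) (a b c : K) : a <> 0 -> a * b = c -> b = c / a.
Proof. by move=> /eqP a0 <-; rewrite mulrC mulKf. Qed.

Lemma rev_horner (K : fieldType) (P : {poly K}) (R x : K) : x <> 0 ->
  (\poly_(i < size P) (P`_((size P).-1 - i) * R ^+ ((size P).-1 - i))).[x]
  = x ^+ (size P).-1 * P.[R / x].
Proof.
move=> /eqP x0; rewrite horner_poly horner_coef mulr_sumr.
rewrite (reindex_inj rev_ord_inj) /=; apply: eq_bigr => i _.
have hi : (i <= (size P).-1)%N by rewrite -ltnS (ltn_predK (ltn_ord i)) ltn_ord.
have e : (size P - i.+1 = (size P).-1 - i)%N by rewrite -subn1 -subnDA add1n.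
rewrite e subKn // expfB_cond; last by rewrite (negbTE x0) add0n.
rewrite expr_div_n; field; by rewrite expf_neq0.
Qed.

Lemma rev_zero (K : fieldType) (P : {poly K}) (R : K) : R <> 0 ->
  \poly_(i < size P) (P`_((size P).-1 - i) * R ^+ ((size P).-1 - i)) = 0 -> P = 0.
Proof.
move=> /eqP R0 h; apply/polyP => i; rewrite coef0.
case: (ltnP i (size P)) => hi; last exact: nth_default.
have := congr1 (fun q : {poly K} => q`_((size P).-1 - i)) h.
rewrite coef_poly coef0 subKn; last by rewrite -subn1; lia.
have -> : ((size P).-1 - i < size P)%N by rewrite -subn1; lia.
by move=> /eqP; rewrite mulf_eq0 expf_eq0 (negbTE R0) andbF orbF => /eqP.
Qed.

Section Mut.
Variable N : nat.
Local Notation F := (ratfun N).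
Local Notation MP := {mpoly rat[N]}.
Implicit Types (v : 'I_N -> F) (p q A B D : MP).
Variable k : 'I_N.

Definition PE v : {rmorphism MP -> F} := mmap (ratRM N) v.
Lemma PEE v p : PE v p = peval v p. Proof. by []. Qed.

Lemma inK_coefs v (P : {poly F}) : (forall j, inK k v P`_j) ->
  exists D (Pm : {poly MP}), [/\ noX k D, peval v D <> 0, (forall j, noX k Pm`_j) &
    (peval v D) *: P = map_poly (PE v) Pm].
Proof.
elim/poly_ind: P => [_|p c IH hc].
  exists 1, 0; split; first exact: noX1.
  - by rewrite peval1 => /eqP; rewrite oner_eq0.
  - by move=> j; rewrite coef0; exact: noX0.
  by rewrite scaler0 rmorph0.
have hp : forall j, inK k v p`_j.
  by move=> j; have := hc j.+1; rewrite coefD coefMX coefC /= addr0.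
have [A2 [D2 [hA2 hD2 n2 ec]]] : inK k v c.
  by have := hc 0%N; rewrite coefD coefMX coefC /= add0r.
have [D1 [Pm1 [hD1 n1 hPm1 e1]]] := IH hp.
exists (D1 * D2), (Pm1 * D2%:P * 'X + (D1 * A2)%:P); split.
- exact: noXM.
- by rewrite pevalM; apply: mulF_neq0.
- move=> j; rewrite coefD coefMX coefMC coefC; case: j => [|j] /=.
    by rewrite add0r; apply: noXM.
  by rewrite addr0; apply: noXM.
apply/polyP => j; rewrite coefZ coef_map !coefD !coefMX coefMC !coefC.
case: j => [|j] /=; rewrite ?mul0r ?add0r ?addr0 ?rmorph0 ?mulr0 ?add0r.
  change (peval v (D1 * D2) * c = peval v (D1 * A2)).
  rewrite ec !pevalM mulrAC -mulrA divfK //; apply/eqP; exact: n2.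
change (peval v (D1 * D2) * p`_j = peval v (Pm1`_j * D2)).
have e1j : peval v D1 * p`_j = peval v Pm1`_j.
  have := congr1 (fun q : {poly F} => q`_j) e1; rewrite /= coefZ coef_map => h; exact: h.
by rewrite !pevalM -e1j mulrAC.
Qed.

Definition ThetaRM : {rmorphism MP -> {poly MP}} := Theta k.

Lemma transc v (P : {poly F}) : alg_indep v -> (forall j, inK k v P`_j) ->
  P.[v k] = 0 -> P = 0.
Proof.
move=> hv hc hP; have [D [Pm [hD nD hPm e]]] := inK_coefs hc.
have h1 : (map_poly (PE v) Pm).[PE v 'X_k] = 0.
  by rewrite -e PEE pevalX hornerZ hP mulr0.
rewrite horner_map PEE in h1; have h2 := hv _ h1.
have h3 : map_poly (Theta k) Pm = map_poly polyC Pm.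
  by apply/polyP => j; rewrite !coef_map; exact: (Theta_noX (hPm j)).
have h4 : Pm = 0.
  have h5 : Theta k (Pm.['X_k]) = (map_poly (Theta k) Pm).[Theta k 'X_k].
    exact: (esym (horner_map ThetaRM Pm 'X_k)).
  have := congr1 (Theta k) h2; rewrite h5 h3 ThetaX eqxx polyC_hornerX.
  by move=> ->; exact: rmorph0.
move: e; rewrite h4 rmorph0 => /eqP; rewrite scale_poly_eq0 => /orP [/eqP //|/eqP //].
Qed.

Lemma peval_Theta v v' p : (forall i, i != k -> v' i = v i) ->
  peval v' p = (map_poly (PE v) (Theta k p)).[v' k].
Proof.
move=> hv; rewrite pevalE; symmetry.
apply: (mmap_uniq (g := fun p => (map_poly (PE v) (Theta k p)).[v' k])).
- by move=> a b; rewrite ThetaD rmorphD hornerD.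
- by move=> a b; rewrite ThetaM rmorphM hornerM.
- by move=> c; rewrite ThetaC map_polyC hornerC; exact: (pevalC v c).
- move=> i; rewrite ThetaX; case: eqP => [->|/eqP ne].
    by rewrite map_polyX hornerX.
  by rewrite map_polyC hornerC hv //; exact: (pevalX v i).
Qed.

End Mut.
Section Mut2.
Variable N : nat.
Local Notation F := (ratfun N).
Local Notation MP := {mpoly rat[N]}.
Implicit Types (v : 'I_N -> F) (p q A B D : MP).

Definition Sg v (f : F) := exists a b, peval v b <> 0 /\ f = peval v a / peval v b.

Lemma one_neq0F : (1 : F) <> 0. Proof. by move=> /eqP; rewrite oner_eq0. Qed.

Lemma Sg_peval v a : Sg v (peval v a).
Proof. by exists a, 1; rewrite peval1 divr1; split=> //; exact: one_neq0F. Qed.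
Lemma SgD v f g : Sg v f -> Sg v g -> Sg v (f + g).
Proof.
move=> [a1 [b1 [n1 ->]]] [a2 [b2 [n2 ->]]]; exists (a1 * b2 + a2 * b1), (b1 * b2).
by rewrite pevalD !pevalM addF_div //; split=> //; apply: mulF_neq0.
Qed.
Lemma SgM v f g : Sg v f -> Sg v g -> Sg v (f * g).
Proof.
move=> [a1 [b1 [n1 ->]]] [a2 [b2 [n2 ->]]]; exists (a1 * a2), (b1 * b2).
by rewrite !pevalM mulf_div; split=> //; apply: mulF_neq0.
Qed.
Lemma SgV v f : Sg v f -> Sg v f^-1.
Proof.
move=> [a [b [n ->]]]; case: (eqVneq (peval v a) 0) => [z|/eqP nz].
  by rewrite z mul0r invr0 -(peval0 v); exact: Sg_peval.
by exists b, a; split=> //; rewrite invfM invrK mulrC.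
Qed.
Lemma SgXn v f j : Sg v f -> Sg v (f ^+ j).
Proof.
move=> h; elim: j => [|j IH]; first by rewrite expr0 -(peval1 v); exact: Sg_peval.
by rewrite exprS; apply: SgM.
Qed.
Lemma Sg_prod v (I : Type) (r : seq I) (P : pred I) (G : I -> F) :
  (forall i, P i -> Sg v (G i)) -> Sg v (\prod_(i <- r | P i) G i).
Proof.
move=> h; apply: big_ind => //; last exact: SgM.
by rewrite -(peval1 v); exact: Sg_peval.
Qed.

Lemma mut_indep (k : 'I_N) v v' A D : alg_indep v -> generates v ->
  (forall i, i != k -> v' i = v i) -> noX k A -> noX k D ->
  peval v A <> 0 -> peval v D <> 0 -> v k * v' k = peval v A / peval v D ->
  alg_indep v' /\ generates v'.
Proof.
move=> hv hg hvv hA hD nA nD hR.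
set R := peval v A / peval v D in hR.
have R0 : R <> 0 := mulF_neq0 nA (invF_neq0 nD).
have RK : inK k v R by exists A, D.
have vk0 := @indep_neq0 N v k hv.
have ev' : v' k = R / v k := solve_mul vk0 hR.
have hind : alg_indep v'.
  move=> p hp.
  pose P := map_poly (PE v) (Theta k p).
  have hPc : forall j, inK k v P`_j.
    move=> j; rewrite coef_map; exact: (inK_peval v (Theta_coef k p j)).
  have hP : P.[R / v k] = 0 by rewrite -ev' /P -(@peval_Theta N k v v' p hvv).
  pose Q := \poly_(i < size P) (P`_((size P).-1 - i) * R ^+ ((size P).-1 - i)).
  have hQc : forall j, inK k v Q`_j.
    move=> j; rewrite coef_poly; case: ifP => _; last exact: inK0.
    by apply: inKM => //; exact: inKXn.
  have hQ : Q.[v k] = 0 by rewrite rev_horner // hP mulr0.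
  have P0 : P = 0 := rev_zero R0 (transc hv hQc hQ).
  apply: Theta_eq0; apply/polyP => j; rewrite coef0; apply: hv.
  have := congr1 (fun q : {poly F} => q`_j) P0; rewrite coef_map coef0 => h; exact: h.
split; first exact: hind.
move=> f.
have vk0' := @indep_neq0 N v' k hind.
have vS : forall i, Sg v' (v i).
  move=> i; case: (eqVneq i k) => [->|ne]; last first.
    by rewrite -hvv // -(pevalX v'); exact: Sg_peval.
  have e : v k = R / v' k := solve_mul vk0' (etrans (mulrC _ _) hR).
  rewrite e /R -(peval_noX hvv hA) -(peval_noX hvv hD) -(pevalX v' k).
  by apply: SgM; [apply: SgM; [|apply: SgV] | apply: SgV]; try exact: Sg_peval.
have pS : forall p, Sg v' (peval v p).
  elim/mpolyind => [|c m p _ _ IH]; first by rewrite peval0 -(peval0 v'); exact: Sg_peval.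
  rewrite pevalD; apply: SgD => //.
  rewrite -mul_mpolyC pevalM pevalC; apply: SgM.
    by rewrite -(pevalC v'); exact: Sg_peval.
  rewrite mpolyXE_id.
  have -> : peval v (\prod_(i < N) 'X_i ^+ m i) = \prod_(i < N) v i ^+ m i.
    by rewrite pevalE -mpolyXE_id mmapX.
  by apply: Sg_prod => i _; apply: SgXn.
have [p [q [nq ->]]] := hg f.
have [a [b [nb e]]] : Sg v' (peval v p / peval v q) by apply: SgM; [exact: pS | apply: SgV; exact: pS].
exists a, b; split; last exact: e.
by apply/eqP.
Qed.

End Mut2.
Lemma tmulE k (a b : trop k) j : tmul a b j = a j + b j. Proof. by rewrite ffunE. Qed.
Lemma taddE k (a b : trop k) j : tadd a b j = Order.min (a j) (b j). Proof. by rewrite ffunE. Qed.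
Lemma toneE k j : tone k j = 0. Proof. by rewrite ffunE. Qed.
Lemma tpowE k (a : trop k) z j : tpow a z j = a j * z. Proof. by rewrite ffunE. Qed.
Lemma tbigE k (I : Type) (r : seq I) (P : pred I) (G : I -> trop k) j :
  (\big[@tmul k/tone k]_(i <- r | P i) G i) j = \sum_(i <- r | P i) G i j.
Proof.
apply: (big_morph (fun a : trop k => a j)); first by move=> a b; rewrite tmulE.
by rewrite toneE.
Qed.

Lemma expfzD' (K : fieldType) (x : K) (a b : int) : x <> 0 -> x ^ (a + b) = x ^ a * x ^ b.
Proof. by move=> /eqP h; rewrite expfzDr. Qed.
Lemma prod_expz (K : fieldType) (I : Type) (r : seq I) (P : pred I) (G : I -> K) (z : int) :
  (\prod_(i <- r | P i) G i) ^ z = \prod_(i <- r | P i) G i ^ z.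
Proof.
apply: (big_morph (fun a : K => a ^ z)); first by move=> a b; rewrite expfzMl.
by rewrite exp1rz.
Qed.
Lemma expz_neq0 (K : fieldType) (x : K) (z : int) : x <> 0 -> x ^ z <> 0.
Proof. by move=> /eqP h /eqP; rewrite expfz_eq0 (negbTE h) andbF. Qed.
Lemma prod_neq0 (K : fieldType) (I : Type) (r : seq I) (P : pred I) (G : I -> K) :
  (forall i, P i -> G i <> 0) -> \prod_(i <- r | P i) G i <> 0.
Proof.
move=> h; apply: (big_ind (fun x : K => x <> 0)) => //; last exact: mulF_neq0.
by move=> /eqP; rewrite oner_eq0.
Qed.

Lemma X_neq0 M (i : 'I_M) : X i <> 0.
Proof.
move=> /eqP; rewrite /X tofrac_eq0 => /eqP h.
by move/negP: (mpolyX_neq0 i); apply; rewrite h.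
Qed.
Lemma XnE M i (h : (i < M)%N) : Xn M i = X (Ordinal h).
Proof. by rewrite /Xn insubT. Qed.
Lemma Xn_neq0 M i : Xn M i <> 0.
Proof.
rewrite /Xn; case: insubP => [j _ _|_]; first exact: X_neq0.
by move=> /eqP; rewrite oner_eq0.
Qed.

Section Mono.
Variables M n : nat.
Local Notation mo := (@mono M n).
Lemma mono_tmul a b : mo (tmul a b) = mo a * mo b.
Proof.
rewrite /mono -big_split; apply: eq_bigr => j _.
by rewrite tmulE expfzD' //; exact: Xn_neq0.
Qed.
Lemma mono_tpow a z : mo (tpow a z) = mo a ^ z.
Proof.
rewrite /mono prod_expz; apply: eq_bigr => j _.
by rewrite tpowE exprz_exp.
Qed.
Lemma mono_tone : mo (tone _) = 1.
Proof. by rewrite /mono big1 // => j _; rewrite toneE expr0z. Qed.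
Lemma mono_neq0 a : mo a <> 0.
Proof. by apply: prod_neq0 => j _; apply: expz_neq0; exact: Xn_neq0. Qed.
Lemma mono_inv a : mo (tpow a (-1)) = (mo a)^-1.
Proof. by rewrite mono_tpow -invr_expz expr1z. Qed.
Lemma mono_big (I : Type) (r : seq I) (P : pred I) (G : I -> trop (M - n)) :
  mo (\big[@tmul _/tone _]_(i <- r | P i) G i) = \prod_(i <- r | P i) mo (G i).
Proof. exact: (big_morph mo mono_tmul mono_tone). Qed.
End Mono.

Section SF.
Variable m : nat.
Hypothesis hm : (0 < m)%N.
Local Notation Fm := (ratfun m).
Lemma sf1 : sf (1 : Fm).
Proof.
have e : X (Ordinal hm) * (X (Ordinal hm))^-1 = 1.
  by apply: divff; apply/eqP; exact: X_neq0.
by rewrite -e; apply: sf_mul; [|apply: sf_inv]; exact: sf_var.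
Qed.
Lemma sfXn (f : Fm) j : sf f -> sf (f ^+ j).
Proof. by move=> h; elim: j => [|j IH]; [rewrite expr0; exact: sf1 | rewrite exprS; exact: sf_mul]. Qed.
Lemma sfXz (f : Fm) (z : int) : sf f -> sf (f ^ z).
Proof.
move=> h; case: z => j; first exact: sfXn.
by rewrite NegzE -invr_expz; apply: sf_inv; exact: sfXn.
Qed.
Lemma sf_prod (I : Type) (r : seq I) (P : pred I) (G : I -> Fm) :
  (forall i, P i -> sf (G i)) -> sf (\prod_(i <- r | P i) G i).
Proof. by move=> h; apply: big_ind => //; [exact: sf1 | exact: sf_mul]. Qed.
Lemma sfXnat i : sf (Xn m i).
Proof. rewrite /Xn; case: insubP => [j _ _|_]; [exact: sf_var | exact: sf1]. Qed.
Lemma sf_mono n e : sf (@mono m n e).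
Proof. by apply: sf_prod => j _; apply: sfXz; exact: sfXnat. Qed.
End SF.
Lemma reduced_rcons n (s : seq 'I_n) a : reduced (rcons s a) -> reduced s.
Proof.
case: s => [//|x s]; rewrite /reduced /= rcons_path => /andP [] //.
Qed.

Lemma vert_ind n (P : vert n -> Prop) : P (troot n) ->
  (forall t k t', edge t k t' -> P t -> P t') -> forall t, P t.
Proof.
move=> h0 hS [s hs]; elim/last_ind: s hs => [|s a IH] hs.
  by have -> : exist _ [::] hs = troot n by apply: val_inj.
have hs' := reduced_rcons hs.
apply: (hS (exist _ s hs') a); first by left.
exact: IH.
Qed.

Lemma ext_lo M n (x : 'I_n -> ratfun M) (h : (n <= M)%N) (i : 'I_n) :
  ext_cluster x (widen_ord h i) = x i.
Proof.
rewrite /ext_cluster /=; case: insubP => [j _ ej|]; last by rewrite ltn_ord.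
by congr x; apply: val_inj.
Qed.
Lemma ext_hi M n (x : 'I_n -> ratfun M) (i : 'I_M) : (n <= i)%N ->
  ext_cluster x i = X i.
Proof.
move=> h; rewrite /ext_cluster; case: insubP => [j hj _|//].
by move: hj; rewrite ltnNge h.
Qed.
Lemma ext_cases M n (x : 'I_n -> ratfun M) (h : (n <= M)%N) (i : 'I_M) :
  (exists i0 : 'I_n, i = widen_ord h i0) \/ (n <= i)%N.
Proof.
case: (ltnP i n) => hi; last by right.
by left; exists (Ordinal hi); apply: val_inj.
Qed.

Lemma sum_sign (I : finType) (a b : I -> int) :
  \sum_i a i * b i = \sum_(i | 0 < b i) a i * b i - \sum_(i | b i < 0) a i * (- b i).
Proof.
rewrite (bigID (fun i => 0 < b i)) /=; congr (_ + _).
rewrite (bigID (fun i => b i < 0)) /= [X in _ + X]big1; last first.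
  move=> i /andP [h1 h2]; have -> : b i = 0 by move: h1 h2; rewrite -!leNgt; lia.
  by rewrite mulr0.
rewrite addr0 -sumrN; apply: eq_big => i; last by move=> _; rewrite mulrN opprK.
case: (ltrgt0P (b i)) => //=.
Qed.

Lemma div_expz (K : fieldType) (p q : K) (z : int) : (p / q) ^ z = p ^ z / q ^ z.
Proof. by rewrite expfzMl exprz_inv invr_expz. Qed.

Lemma exch_field (K : fieldType) (pk pk' qk qk' mY mSp mSm mT mMo Pp Pm : K) :
 qk <> 0 -> qk' <> 0 -> mSp <> 0 -> mSm <> 0 -> mT <> 0 -> mMo <> 0 ->
 pk * pk' = (mY * Pp + Pm) / mMo -> qk * qk' = mT / mMo ->
 pk / qk * (pk' / qk') = (mY * mSp / mSm * (Pp / mSp) + Pm / mSm) / (mT / mSm).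
Proof.
move=> /eqP h1 /eqP h2 /eqP h3 /eqP h4 /eqP h5 /eqP h6 e1 e2.
rewrite mulf_div e1 e2; field.
by rewrite h3 h4 h5 h6.
Qed.
Lemma sum_sgz (I : finType) (a b : I -> int) (c : int) :
  \sum_i a i * (sgz (b i) * Order.max (b i * c) 0) =
  Order.max c 0 * \sum_(i | 0 < b i) a i * b i
  - Order.max (- c) 0 * \sum_(i | b i < 0) a i * (- b i).
Proof.
rewrite !mulr_sumr (bigID (fun i => 0 < b i)) /=; congr (_ + _).
  apply: eq_bigr => i hb; rewrite gtr0_sgz // mul1r !maxEle.
  by case: leP => h1; case: leP => h2; nia.
rewrite (bigID (fun i => b i < 0)) /= [X in _ + X]big1; last first.
  move=> i /andP [h1 h2]; have -> : b i = 0 by move: h1 h2; rewrite -!leNgt; lia.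
  by rewrite sgz0 mul0r mulr0.
rewrite addr0 -sumrN; apply: eq_big => i; first by case: (ltrgt0P (b i)).
move=> /andP [_ hb]; rewrite ltr0_sgz // !maxEle.
by case: leP => h1; case: leP => h2; nia.
Qed.
Lemma ymut_int (Yj Y Mo sp sm ak ak' R bb : int) :
  ak + ak' = Order.min (Y + sp) sm - Mo ->
  Yj + (Y * Order.max bb 0 + Mo * - bb) + (ak' * - bb + (R + (Order.max bb 0 * sp - Order.max (- bb) 0 * sm)))
  = Yj + (ak * bb + R) + ((Y + (sp - sm)) * Order.max bb 0 + Order.min (Y + (sp - sm)) 0 * - bb).
Proof.
move=> h; have -> : ak' = Order.min (Y + sp) sm - Mo - ak by rewrite -h; ring.
have -> : Order.min (Y + (sp - sm)) 0 = Order.min (Y + sp) sm - sm.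
  by rewrite !minEle; case: leP => h1; case: leP => h2; lia.
have -> : Order.max (- bb) 0 = Order.max bb 0 - bb.
  by rewrite !maxEle; case: leP => h1; case: leP => h2; lia.
ring.
Qed.
Section Main.
Variables (n m mb : nat) (hn : (0 < n)%N) (hm : (0 < m)%N)
  (hmb : (0 < mb)%N) (hnm : (n <= m)%N) (hnmb : (n <= mb)%N)
  (phi : ratfun m -> trop (mb - n)) (psi : ratfun m -> ratfun mb).
Hypothesis hphi : sf_hom_trop phi.
Hypothesis hpsi : sf_hom psi.
Hypothesis hpsi_x : forall i : 'I_m,
     psi (X i) = (if (val i < n)%N then Xn mb (val i) * @mono mb n (phi (X i))
                  else @mono mb n (phi (X i))).
Local Notation Fm := (ratfun m).
Local Notation Fb := (ratfun mb).
Local Notation T := (trop (mb - n)).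
Local Notation mo := (@mono mb n).

Lemma phiM (f g : Fm) : sf f -> sf g -> phi (f * g) = tmul (phi f) (phi g).
Proof. by move=> hf hg; case: (hphi hf hg). Qed.
Lemma phiD (f g : Fm) : sf f -> sf g -> phi (f + g) = tadd (phi f) (phi g).
Proof. by move=> hf hg; case: (hphi hf hg). Qed.
Lemma phi1 : phi 1 = tone _.
Proof.
have := phiM (sf1 hm) (sf1 hm); rewrite mulr1 => h.
apply/ffunP => j; have := congr1 (fun a : T => a j) h; rewrite /= tmulE toneE.
move=> e; lia.
Qed.
Lemma phiV (f : Fm) : sf f -> f <> 0 -> phi f^-1 = tpow (phi f) (-1).
Proof.
move=> hf f0; have := phiM hf (sf_inv hf); rewrite divff; last exact/eqP.
rewrite phi1 => h; apply/ffunP => j; have := congr1 (fun a : T => a j) h.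
rewrite /= tmulE toneE tpowE => e; lia.
Qed.
Lemma phiXn (f : Fm) j : sf f -> phi (f ^+ j) = tpow (phi f) j.
Proof.
move=> hf; elim: j => [|j IH].
  by rewrite expr0 phi1; apply/ffunP => c; rewrite toneE tpowE mulr0.
rewrite exprS phiM ?IH //; last exact: (sfXn hm).
by apply/ffunP => c; rewrite tmulE !tpowE intS mulrDr mulr1.
Qed.
Lemma phiXz (f : Fm) (z : int) : sf f -> f <> 0 -> phi (f ^ z) = tpow (phi f) z.
Proof.
move=> hf f0; case: z => j; first exact: phiXn.
rewrite NegzE -invr_expz phiV; first last.
- by move=> /eqP; rewrite expf_eq0 andbC => /andP [/eqP] //.
- exact: (sfXn hm).
rewrite phiXn //; apply/ffunP => c; rewrite !tpowE; ring.
Qed.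
Lemma phi_prod (I : Type) (r : seq I) (P : pred I) (G : I -> Fm) :
  (forall i, P i -> sf (G i)) ->
  phi (\prod_(i <- r | P i) G i) = \big[@tmul _/tone _]_(i <- r | P i) phi (G i).
Proof.
move=> h.
suff : sf (\prod_(i <- r | P i) G i) /\
  phi (\prod_(i <- r | P i) G i) = \big[@tmul _/tone _]_(i <- r | P i) phi (G i) by case.
apply: (big_ind2 (fun f a => sf f /\ phi f = a)).
- by split; [exact: sf1 | exact: phi1].
- by move=> f1 a1 f2 a2 [s1 <-] [s2 <-]; split; [exact: sf_mul | exact: phiM].
- by move=> i Pi; split; [exact: h |].
Qed.

Lemma psiM (f g : Fm) : sf f -> sf g -> psi (f * g) = psi f * psi g.
Proof. by move=> hf hg; case: (hpsi.2 f g hf hg). Qed.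
Lemma psiD (f g : Fm) : sf f -> sf g -> psi (f + g) = psi f + psi g.
Proof. by move=> hf hg; case: (hpsi.2 f g hf hg). Qed.
Lemma psiX_neq0 (i : 'I_m) : psi (X i) <> 0.
Proof.
rewrite hpsi_x; case: ifP => _; last exact: mono_neq0.
by apply: mulF_neq0; [exact: Xn_neq0 | exact: mono_neq0].
Qed.
Lemma psi1 : psi 1 = 1.
Proof.
pose i0 := Ordinal hm.
have := psiM (sf_var i0) (sf1 hm); rewrite mulr1 => h.
have h0 : psi (X i0) <> 0 := @psiX_neq0 i0.
apply: (mulfI (x := psi (X i0))); first exact/eqP.
by rewrite mulr1 -h.
Qed.
Lemma psiV (f : Fm) : sf f -> f <> 0 -> psi f^-1 = (psi f)^-1 /\ psi f <> 0.
Proof.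
move=> hf f0; have := psiM hf (sf_inv hf); rewrite divff; last exact/eqP.
rewrite psi1 => h.
have p0 : psi f <> 0.
  move=> e; rewrite e mul0r in h; exact: (one_neq0F h).
split=> //; apply: (mulfI (x := psi f)); first exact/eqP.
by rewrite -h divff //; exact/eqP.
Qed.
Lemma psi_neq0 (f : Fm) : sf f -> f <> 0 -> psi f <> 0.
Proof. by move=> hf f0; case: (psiV hf f0). Qed.
Lemma psiXn (f : Fm) j : sf f -> psi (f ^+ j) = psi f ^+ j.
Proof.
move=> hf; elim: j => [|j IH]; first by rewrite !expr0 psi1.
by rewrite !exprS psiM ?IH //; exact: (sfXn hm).
Qed.
Lemma psiXz (f : Fm) (z : int) : sf f -> f <> 0 -> psi (f ^ z) = psi f ^ z.
Proof.
move=> hf f0; case: z => j; first exact: psiXn.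
rewrite NegzE -!invr_expz; case: (psiV (sfXn hm j.+1 hf) _) => [|-> _].
  by move=> /eqP; rewrite expf_eq0 andbC => /andP [/eqP] //.
by rewrite psiXn.
Qed.
Lemma psi_prod (I : Type) (r : seq I) (P : pred I) (G : I -> Fm) :
  (forall i, P i -> sf (G i)) ->
  psi (\prod_(i <- r | P i) G i) = \prod_(i <- r | P i) psi (G i).
Proof.
move=> h.
suff : sf (\prod_(i <- r | P i) G i) /\
  psi (\prod_(i <- r | P i) G i) = \prod_(i <- r | P i) psi (G i) by case.
apply: (big_ind2 (fun f a => sf f /\ psi f = a)).
- by split; [exact: sf1 | exact: psi1].
- by move=> f1 a1 f2 a2 [s1 <-] [s2 <-]; split; [exact: sf_mul | exact: psiM].
- by move=> i Pi; split; [exact: h |].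
Qed.

Lemma psi_mono (e : trop (m - n)) : psi (@mono m n e) = mo (phi (@mono m n e)).
Proof.
have E : @mono m n e = \prod_(j < m - n) Xn m (n + j) ^ (e j) by [].
rewrite E psi_prod; last by move=> j _; apply: (sfXz hm); exact: (sfXnat hm).
rewrite phi_prod; last by move=> j _; apply: (sfXz hm); exact: (sfXnat hm).
rewrite mono_big; apply: eq_bigr => j _.
have hj : (n + j < m)%N by have := ltn_ord j; lia.
rewrite (XnE hj) psiXz ?phiXz ?mono_tpow //; try exact: sf_var; try exact: X_neq0.
by rewrite hpsi_x /= ltnNge leq_addr.
Qed.


Variables (x : vert n -> 'I_n -> Fm) (y : vert n -> 'I_n -> trop (m - n))
  (B : vert n -> 'M[int]_n).
Hypothesis hseed : seed_pattern x y B.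
Hypothesis hinit : forall i : 'I_n, x (troot n) i = X (widen_ord hnm i).

Lemma x_neq0 t i : x t i <> 0.
Proof.
have [hi _] := hseed.1 t.
by have := @indep_neq0 m _ (widen_ord hnm i) hi; rewrite ext_lo.
Qed.

Lemma Bkk t k : B t k k = 0.
Proof. have [d [hd e]] := hseed.2.1 t; have := e k k; have := hd k; nia. Qed.

Lemma sf_x t i : sf (x t i).
Proof.
move: t i; apply: vert_ind => [i|t k t' he IH i]; first by rewrite hinit; exact: sf_var.
have [_ _ hx hE] := hseed.2.2 t t' k he.
case: (eqVneq i k) => [->|ne]; last by rewrite hx.
rewrite (solve_mul (@x_neq0 t k) hE).
apply: sf_mul; last exact: sf_inv.
apply: sf_mul; last by apply: sf_inv; exact: sf_mono.
apply: sf_add; last by apply: (sf_prod hm) => i0 _; apply: (sfXz hm).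
apply: sf_mul; first exact: sf_mono.
by apply: (sf_prod hm) => i0 _; apply: (sfXz hm).
Qed.

Definition xb t i := psi (x t i) / mo (phi (x t i)).
Definition yb t k := phi (yhat (x t) (y t) (B t) k).

Lemma xb_neq0 t i : xb t i <> 0.
Proof.
apply: mulF_neq0; last by apply: invF_neq0; exact: mono_neq0.
by apply: psi_neq0; [exact: sf_x | exact: x_neq0].
Qed.

Lemma phi_yhat t k : yb t k =
  tmul (phi (@mono m n (y t k))) (\big[@tmul _/tone _]_(i < n) tpow (phi (x t i)) (B t i k)).
Proof.
have sP : sf (\prod_(i < n) x t i ^ B t i k).
  by apply: (sf_prod hm) => i _; apply: (sfXz hm); exact: sf_x.
rewrite /yb /yhat (phiM (sf_mono hm _) sP).
rewrite [phi (\prod_(i < n) _)]phi_prod; last by move=> i _; apply: (sfXz hm); exact: sf_x.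
by congr tmul; apply: eq_bigr => i _; rewrite phiXz //; [exact: sf_x | exact: x_neq0].
Qed.

Lemma exch_new t k t' : edge t k t' ->
  xb t k * xb t' k =
  (mo (yb t k) * \prod_(i < n | 0 < B t i k) xb t i ^ B t i k
   + \prod_(i < n | B t i k < 0) xb t i ^ (- B t i k))
  / mo (tadd (yb t k) (tone _)).
Proof.
move=> he; have [_ _ hx hE] := hseed.2.2 t t' k he.
set b := B t.
pose a i := phi (x t i).
pose Y := phi (@mono m n (y t k)).
pose Mo := phi (@mono m n (tadd (y t k) (tone (m - n)))).
pose Sp := \big[@tmul _/tone _]_(i < n | 0 < b i k) tpow (a i) (b i k).
pose Sm := \big[@tmul _/tone _]_(i < n | b i k < 0) tpow (a i) (- b i k).
pose Pp := \prod_(i < n | 0 < b i k) psi (x t i) ^ b i k.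
pose Pm := \prod_(i < n | b i k < 0) psi (x t i) ^ (- b i k).
have sfPp : sf (\prod_(i < n | 0 < b i k) x t i ^ b i k).
  by apply: (sf_prod hm) => i _; apply: (sfXz hm); exact: sf_x.
have sfPm : sf (\prod_(i < n | b i k < 0) x t i ^ (- b i k)).
  by apply: (sf_prod hm) => i _; apply: (sfXz hm); exact: sf_x.
have sfN : sf (@mono m n (y t k) * \prod_(i < n | 0 < b i k) x t i ^ b i k).
  by apply: sf_mul => //; exact: sf_mono.
have sfM1 := sf_mono hm (tadd (y t k) (tone (m - n))).
have M1n := @mono_neq0 m n (tadd (y t k) (tone (m - n))).
have e2 : psi (x t k) * psi (x t' k) = (mo Y * Pp + Pm) / mo Mo.
  rewrite -(psiM (sf_x t k) (sf_x t' k)).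
  rewrite hE psiM; [|exact: sf_add|exact: sf_inv].
  have [-> _] := psiV sfM1 M1n.
  rewrite psiD // psiM //; last exact: sf_mono.
  rewrite !psi_mono !psi_prod; try by move=> i _; apply: (sfXz hm); exact: sf_x.
  congr ((_ * _ + _) / _); apply: eq_bigr => i _; rewrite psiXz //;
    first [exact: sf_x | exact: x_neq0].
have e3 : tmul (a k) (phi (x t' k)) = tmul (tadd (tmul Y Sp) Sm) (tpow Mo (-1)).
  rewrite -(phiM (sf_x t k) (sf_x t' k)).
  rewrite hE phiM; [|exact: sf_add|exact: sf_inv].
  rewrite phiV // phiD // phiM //; last exact: sf_mono.
  rewrite [phi (\prod_(i < n | 0 < b i k) _)]phi_prod; last by move=> i _; apply: (sfXz hm); exact: sf_x.
  rewrite [phi (\prod_(i < n | b i k < 0) _)]phi_prod; last by move=> i _; apply: (sfXz hm); exact: sf_x.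
  congr (tmul (tadd (tmul _ _) _) _); apply: eq_bigr => i _; rewrite phiXz //;
    first [exact: sf_x | exact: x_neq0].
have e6 : yb t k = tmul (tmul Y Sp) (tpow Sm (-1)).
  rewrite phi_yhat; apply/ffunP => c; rewrite !tmulE tpowE !tbigE.
  under eq_bigr do rewrite tpowE.
  under [X in _ = _ + X + _]eq_bigr do rewrite tpowE.
  under [X in _ = _ + _ + X * _]eq_bigr do rewrite tpowE.
  rewrite (sum_sign (fun i => a i c)); ring.
have e7 : tadd (yb t k) (tone _) = tmul (tadd (tmul Y Sp) Sm) (tpow Sm (-1)).
  rewrite e6; apply/ffunP => c; rewrite !(taddE, tmulE, tpowE, toneE).
  rewrite !minEle; case: leP => h1; case: leP => h2; lia.
have e4 : \prod_(i < n | 0 < b i k) xb t i ^ b i k = Pp / mo Sp.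
  rewrite /xb /Sp mono_big -prodf_div; apply: eq_bigr => i _.
  by rewrite div_expz mono_tpow.
have e5 : \prod_(i < n | b i k < 0) xb t i ^ (- b i k) = Pm / mo Sm.
  rewrite /xb /Sm mono_big -prodf_div; apply: eq_bigr => i _.
  by rewrite div_expz mono_tpow.
rewrite e4 e5 e7 e6 !mono_tmul !mono_inv.
rewrite /xb; apply: (exch_field _ _ _ _ _ _ e2); try exact: mono_neq0.
by rewrite -mono_tmul e3 mono_tmul mono_inv.
Qed.

Lemma L_tmul (e1 e2 : trop (m - n)) :
  phi (@mono m n (tmul e1 e2)) = tmul (phi (@mono m n e1)) (phi (@mono m n e2)).
Proof. by rewrite mono_tmul phiM //; exact: sf_mono. Qed.
Lemma L_tpow (e : trop (m - n)) z : phi (@mono m n (tpow e z)) = tpow (phi (@mono m n e)) z.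
Proof. by rewrite mono_tpow phiXz //; [exact: sf_mono | exact: mono_neq0]. Qed.

Lemma phi_exch t k t' : edge t k t' -> forall c,
  phi (x t k) c + phi (x t' k) c =
  Order.min (phi (@mono m n (y t k)) c + \sum_(i | 0 < B t i k) phi (x t i) c * B t i k)
            (\sum_(i | B t i k < 0) phi (x t i) c * - B t i k)
  - phi (@mono m n (tadd (y t k) (tone (m - n)))) c.
Proof.
move=> he c; have [_ _ hx hE] := hseed.2.2 t t' k he.
set b := B t.
have sfPp : sf (\prod_(i < n | 0 < b i k) x t i ^ b i k).
  by apply: (sf_prod hm) => i _; apply: (sfXz hm); exact: sf_x.
have sfPm : sf (\prod_(i < n | b i k < 0) x t i ^ (- b i k)).
  by apply: (sf_prod hm) => i _; apply: (sfXz hm); exact: sf_x.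
have sfN : sf (@mono m n (y t k) * \prod_(i < n | 0 < b i k) x t i ^ b i k).
  by apply: sf_mul => //; exact: sf_mono.
have sfM1 := sf_mono hm (tadd (y t k) (tone (m - n))).
have M1n := @mono_neq0 m n (tadd (y t k) (tone (m - n))).
rewrite -tmulE -(phiM (sf_x t k) (sf_x t' k)).
rewrite hE phiM; [|exact: sf_add|exact: sf_inv].
rewrite phiV // phiD // phiM //; last exact: sf_mono.
rewrite [phi (\prod_(i < n | 0 < b i k) _)]phi_prod; last by move=> i _; apply: (sfXz hm); exact: sf_x.
rewrite [phi (\prod_(i < n | b i k < 0) _)]phi_prod; last by move=> i _; apply: (sfXz hm); exact: sf_x.
rewrite !(tmulE, taddE, tpowE, tbigE) mulrN1; congr (Order.min (_ + _) _ - _).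
  apply: eq_bigr => i _; rewrite phiXz ?tpowE //; first [exact: sf_x | exact: x_neq0].
apply: eq_bigr => i _; rewrite phiXz ?tpowE //; first [exact: sf_x | exact: x_neq0].
Qed.

Lemma yb_pt t j c : yb t j c =
  phi (@mono m n (y t j)) c + \sum_i phi (x t i) c * B t i j.
Proof.
rewrite phi_yhat tmulE tbigE; congr (_ + _); apply: eq_bigr => i _; exact: tpowE.
Qed.

Lemma ymut_new t k t' : edge t k t' -> forall j, yb t' j = y_mut k (B t) (yb t) j.
Proof.
move=> he j; have [hB hy hx hE] := hseed.2.2 t t' k he.
have ex := phi_exch he.
apply/ffunP => c; rewrite yb_pt hy hB.
set b := B t.
pose al i := phi (x t i) c.
have hx' : forall i, i != k -> phi (x t' i) c = al i by move=> i ne; rewrite /al hx.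
have bkk : b k k = 0 by exact: Bkk.
rewrite /y_mut; case: eqP => [->|/eqP ne].
  rewrite L_tpow !tpowE yb_pt mulrN1 mulrN1.
  rewrite (bigD1 k) //= mxE eqxx orbT bkk oppr0 mulr0 add0r.
  rewrite [X in _ = - (_ + X)](bigD1 k) //= bkk mulr0 add0r opprD -sumrN.
  congr (_ + _); apply: eq_bigr => i ne; rewrite mxE eqxx orbT mulrN hx' //.
rewrite !L_tmul !L_tpow !(tmulE, tpowE, taddE, toneE) !yb_pt.
rewrite (bigD1 k) //= mxE eqxx /=.
have e1 : \sum_(i < n | i != k) phi (x t' i) c * mat_mut k b i j =
  \sum_(i < n | i != k) al i * b i j + \sum_i al i * (sgz (b i k) * Order.max (b i k * b k j) 0).
  rewrite [X in _ = _ + X](bigD1 k) //= bkk sgz0 mul0r mulr0 add0r -big_split /=.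
  apply: eq_bigr => i ni; rewrite mxE (negbTE ni) (negbTE ne) /= hx' //.
  by rewrite mulrDr.
rewrite e1 (sum_sgz al (fun i => b i k) (b k j)) /al /b.
rewrite (sum_sign (fun i => phi (x t i) c) (fun i => B t i k)).
rewrite [\sum_(i < n) phi (x t i) c * B t i j](bigD1 k) //=.
have := ex c.
set Y := phi (mono (y t k)) c; set Mo := phi (mono (tadd (y t k) (tone (m - n)))) c.
set sp := \sum_(i < n | 0 < B t i k) _; set sm := \sum_(i < n | B t i k < 0) _.
set R := \sum_(i < n | i != k) _.
set ak := phi (x t k) c; set ak' := phi (x t' k) c; set bb := B t k j.
move=> h; exact: ymut_int h.
Qed.

Lemma xb_root (i : 'I_n) : xb (troot n) i = Xn mb i.
Proof.
rewrite /xb hinit hpsi_x /= ltn_ord mulfK //; apply/eqP; exact: mono_neq0.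
Qed.

Lemma ext_root : ext_cluster (xb (troot n)) =1 @X mb.
Proof.
move=> i; case: (ext_cases (xb (troot n)) hnmb i) => [[i0 ->]|hi]; last exact: ext_hi.
by rewrite ext_lo xb_root (XnE (leq_trans (ltn_ord i0) hnmb)); congr X; apply: val_inj.
Qed.

Lemma indep_ext M (v v' : 'I_M -> ratfun M) : v =1 v' ->
  alg_indep v /\ generates v -> alg_indep v' /\ generates v'.
Proof.
move=> e [hi hg]; split.
  by move=> p; rewrite -(peval_ext p e); exact: hi.
move=> f; have [p [q [nq ef]]] := hg f.
by exists p, q; rewrite -!(peval_ext _ e).
Qed.

Lemma inK_mono (v : 'I_mb -> Fb) (K : 'I_mb) (e : T) :
  (K < n)%N -> (forall i : 'I_mb, (n <= i)%N -> v i = X i) -> inK K v (mo e).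
Proof.
move=> hK hv; apply: inK_prod => j _; apply: inKXz.
have hj : (n + j < mb)%N by have := ltn_ord j; lia.
rewrite (XnE hj) -hv /=; last exact: leq_addr.
apply: inKX; apply/negP => /eqP /(congr1 val) /= e'.
by move: hK; rewrite -e' ltnNge leq_addr.
Qed.

Lemma indep_all t : alg_indep (ext_cluster (xb t)) /\ generates (ext_cluster (xb t)).
Proof.
move: t; apply: vert_ind.
  apply: (indep_ext (v := @X mb)); first by move=> i; rewrite ext_root.
  by split; [exact: X_indep | exact: X_gen].
move=> t k t' he [hi hg].
have [_ _ hx _] := hseed.2.2 t t' k he.
pose K := widen_ord hnmb k.
have vK : forall i : 'I_mb, (n <= i)%N -> ext_cluster (xb t) i = X i by move=> i; exact: ext_hi.
have hR : inK K (ext_cluster (xb t)) (xb t k * xb t' k).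
  have hKn : (K < n)%N by exact: (ltn_ord k).
  rewrite exch_new //; apply: inKM; last by apply: inKV; apply: inK_mono.
  apply: inKD; last first.
    apply: inK_prod => i hb; apply: inKXz; rewrite -(ext_lo _ hnmb).
    apply: inKX; apply/negP => /eqP /(congr1 val) /= ik.
    have : i = k by apply: val_inj.
    by move=> eik; move: hb; rewrite eik Bkk ltxx.
  apply: inKM; first exact: inK_mono.
  apply: inK_prod => i hb; apply: inKXz; rewrite -(ext_lo _ hnmb).
  apply: inKX; apply/negP => /eqP /(congr1 val) /= ik.
  have : i = k by apply: val_inj.
  by move=> eik; move: hb; rewrite eik Bkk ltxx.
have [A [D [hA hD nD eR]]] := hR.
have R0 : xb t k * xb t' k <> 0 by apply: mulF_neq0; exact: xb_neq0.
have nA : peval (ext_cluster (xb t)) A <> 0.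
  by move=> z; apply: R0; rewrite eR z mul0r.
apply: (mut_indep (k := K) hi hg _ hA hD nA nD).
  move=> i ne; case: (ext_cases (xb t) hnmb i) => [[i0 ei]|hin].
    rewrite ei !ext_lo /xb hx //; apply/negP => /eqP e0; move: ne.
    by rewrite ei e0 eqxx.
  by rewrite !ext_hi.
by rewrite /K !ext_lo.
Qed.

Lemma main_seed : seed_pattern (fun t i => psi (x t i) / mo (phi (x t i)))
    (fun t k => phi (yhat (x t) (y t) (B t) k)) B.
Proof.
split; [|split].
- move=> t; exact: (indep_all t).
- exact: hseed.2.1.
move=> t t' k he; have [hB hy hx hE] := hseed.2.2 t t' k he; split.
- exact: hB.
- apply: functional_extensionality => j; exact: (ymut_new he j).
- by move=> i ne; rewrite hx.
- exact: (exch_new he).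
Qed.

End Main.

Theorem theorem4p3p4 (n m mb : nat) (hn : (0 < n)%N) (hm : (0 < m)%N)
  (hmb : (0 < mb)%N) (hnm : (n <= m)%N) (hnmb : (n <= mb)%N)
  (phi : ratfun m -> trop (mb - n)) (psi : ratfun m -> ratfun mb)
  (hphi : sf_hom_trop phi) (hpsi : sf_hom psi)
  (hpsi_x : forall i : 'I_m,
     psi (X i) = (if (val i < n)%N then Xn mb (val i) * @mono mb n (phi (X i))
                  else @mono mb n (phi (X i))))
  (x : vert n -> 'I_n -> ratfun m) (y : vert n -> 'I_n -> trop (m - n))
  (B : vert n -> 'M[int]_n)
  (hseed : seed_pattern x y B)
  (hinit : forall i : 'I_n, x (troot n) i = X (widen_ord hnm i)) :
  seed_pattern
    (fun t i => psi (x t i) / @mono mb n (phi (x t i)))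
    (fun t k => phi (yhat (x t) (y t) (B t) k))
    B.
Proof. by eapply main_seed; eassumption. Qed.
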